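(* Let $\pi$ be a rectangular permutation. Then each of $\psi_1(\pi)$, $\psi_2(\pi)$, $\psi_u(\pi)$, $\psi_d(\pi)$ that is defined (i.e. for which $\pi$ lies in the operator's domain) is again rectangular.
   Context: A permutation is rectangular if it avoids the patterns $2413,2431,4213,4231$. For $\pi\in S_n$ (one-line form $[\pi_1\cdots\pi_n]$) and $1\le i,j\le n+1$, $\rho_{i,j}(\pi)\in S_{n+1}$ is obtained by increasing by $1$ every entry $\ge i$ and inserting the value $i$ at position $j$. Operators: $\psi_1=\rho_{1,1}$, defined on all rectangular permutations (including the empty permutation $e_0$); $\psi_2=\rho_{1,2}$, defined on rectangular $\pi$ of size $\ge1$ with $\pi_1\neq1$; $\psi_u(\pi)=\rho_{\pi_1,1}(\pi)$, defined on rectangular $\pi$ of size $\ge1$ with $\pi_1\ne1$; $\psi_d(\pi)=\rho_{\pi_1+1,1}(\pi)$, defined on rectangular $\pi$ of size $\ge1$. *)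

(* Defs.v *)
From mathcomp Require Import all_boot.
Set Implicit Arguments. Unset Strict Implicit. Unset Printing Implicit Defensive.

(* s is a permutation of {1,...,size s} in one-line form [s_1 ... s_n] *)
Definition is_perm (s : seq nat) : bool := perm_eq s (iota 1 (size s)).

Definition order_iso (t p : seq nat) : Prop :=
  size t = size p /\
  forall i j, i < size p -> j < size p ->
    (nth 0 t i < nth 0 t j) = (nth 0 p i < nth 0 p j).

Definition contains (s p : seq nat) : Prop :=
  exists t, subseq t s /\ order_iso t p.

Definition avoids (s p : seq nat) : Prop := ~ contains s p.

Definition rectangular (s : seq nat) : Prop :=
  [/\ avoids s [:: 2; 4; 1; 3], avoids s [:: 2; 4; 3; 1],
      avoids s [:: 4; 2; 1; 3] & avoids s [:: 4; 2; 3; 1]].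

(* rho_{i,j}: increase every entry >= i by 1, insert value i at position j
   (positions 1-indexed) *)
Definition rho (i j : nat) (s : seq nat) : seq nat :=
  let s' := map (fun x => if i <= x then x.+1 else x) s in
  take j.-1 s' ++ i :: drop j.-1 s'.

Definition psi1 (s : seq nat) := rho 1 1 s.
Definition psi2 (s : seq nat) := rho 1 2 s.
Definition psiu (s : seq nat) := rho (head 0 s) 1 s.
Definition psid (s : seq nat) := rho (head 0 s).+1 1 s.

(* Main.v *)
Require Import Defs.
From mathcomp Require Import all_boot.
From mathcomp Require Import zify.

Definition bad (a b c d : nat) : Prop :=
  (c < a < d) && (d < b) \/ (d < a < c) && (c < b) \/
  (c < b < d) && (d < a) \/ (d < b < c) && (c < a).

Definition P (s : seq nat) : Prop :=
  forall a b c d, subseq [:: a; b; c; d] s -> ~ bad a b c d.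

Ltac oiso := split=> //; move=> [|[|[|[|?]]]] [|[|[|[|?]]]] ? ? //=; lia.

Ltac getchain H := move: (H 0 1 isT isT) (H 0 2 isT isT) (H 0 3 isT isT)
   (H 1 2 isT isT) (H 1 3 isT isT) (H 2 3 isT isT)
   (H 1 0 isT isT) (H 2 0 isT isT) (H 3 0 isT isT)
   (H 2 1 isT isT) (H 3 1 isT isT) (H 3 2 isT isT) => /=.

Lemma rectP s : rectangular s <-> P s.
Proof.
split.
- case=> h1 h2 h3 h4 a b c d hs hb.
  case: hb => [hb|[hb|[hb|hb]]].
  + apply: h1; exists [:: a; b; c; d]; split => //; oiso.
  + apply: h2; exists [:: a; b; c; d]; split => //; oiso.
  + apply: h3; exists [:: a; b; c; d]; split => //; oiso.
  + apply: h4; exists [:: a; b; c; d]; split => //; oiso.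
- move=> hP; split=> -[t [hs [hsz H]]];
  case: t hs hsz H => [|a [|b [|c [|d [|e t]]]]] //= hs _ H;
  apply: (hP a b c d hs); getchain H; rewrite /bad; lia.
Qed.

Lemma subseq_map_inv (f : nat -> nat) s t :
  subseq t (map f s) -> exists t', subseq t' s /\ t = map f t'.
Proof.
elim: s t => [|x s IH] t /=.
  by move/eqP->; exists [::].
case: t => [|y t]; first by exists [::].
case: eqP => [->|ne] /IH [t' [h1 h2]].
  by exists (x :: t'); rewrite /= eqxx h2.
exists t'; split => //; exact: subseq_trans h1 (subseq_cons _ _).
Qed.

Lemma P_map (f : nat -> nat) s :
  (forall x y, (f x < f y) = (x < y)) -> P s -> P (map f s).
Proof.
move=> hf hP a b c d /subseq_map_inv [[|a' [|b' [|c' [|d' [|e' t']]]]] [hs //= [-> -> -> ->]]].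
rewrite /bad !hf; exact: hP.
Qed.

Lemma P_cons_small x s : P s -> (forall z, z \in s -> x <= z) -> P (x :: s).
Proof.
move=> hP hx a b c d /=; case: eqP => [eax|_] hs; last exact: hP.
have hc : c \in s by apply: (mem_subseq hs); rewrite !inE eqxx orbT.
have hd : d \in s by apply: (mem_subseq hs); rewrite !inE eqxx !orbT.
move: (hx _ hc) (hx _ hd); rewrite /bad; lia.
Qed.

Lemma P_cons2_small h x s : P (h :: s) -> (forall z, z \in s -> x <= z) ->
  P (h :: x :: s).
Proof.
move=> hP hx a b c d /=; case: eqP => [eah|_] hs.
  move: hs; case: eqP => [ebx|_] hs.
    have hc : c \in s by apply: (mem_subseq hs); rewrite inE eqxx.
    have hd : d \in s by apply: (mem_subseq hs); rewrite !inE eqxx orbT.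
    move: (hx _ hc) (hx _ hd); rewrite /bad; lia.
  by apply: hP; rewrite /= eah eqxx.
move: hs; case: eqP => [eax|_] hs.
  have hc : c \in s by apply: (mem_subseq hs); rewrite !inE eqxx orbT.
  have hd : d \in s by apply: (mem_subseq hs); rewrite !inE eqxx !orbT.
  move: (hx _ hc) (hx _ hd); rewrite /bad; lia.
by apply: hP; apply: subseq_trans hs (subseq_cons _ _).
Qed.

Lemma P_adj x y s : P (y :: s) -> x \notin y :: s -> y \notin s ->
  (x.+1 = y \/ y.+1 = x) -> P (x :: y :: s).
Proof.
move=> hP hx hy hadj a b c d /=; case: eqP => [eax|_] hs; last exact: hP.
have nx z : z \in y :: s -> z <> x by move=> hz ez; rewrite -ez hz in hx.
move: hs; case: eqP => [eby|_] hs.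
  rewrite /bad; lia.
have hb : b \in s by apply: (mem_subseq hs); rewrite inE eqxx.
have hc : c \in s by apply: (mem_subseq hs); rewrite !inE eqxx orbT.
have hd : d \in s by apply: (mem_subseq hs); rewrite !inE eqxx !orbT.
have ny z : z \in s -> z <> y by move=> hz ez; rewrite -ez hz in hy.
move: (nx b); move: (nx c); move: (nx d); rewrite !inE hb hc hd !orbT.
move=> /(_ isT) nd /(_ isT) nc /(_ isT) nb.
move: (ny _ hb) (ny _ hc) (ny _ hd) => yb yc yd hbad.
apply: (hP y b c d); first by rewrite /= eqxx.
move: hbad; rewrite /bad; lia.
Qed.

Definition fI (i x : nat) := if i <= x then x.+1 else x.
Arguments fI : simpl never.

Lemma fI_mono i x y : (fI i x < fI i y) = (x < y).
Proof. rewrite /fI; case: (leqP i x) => hx; case: (leqP i y) => hy; rewrite ?ltnS //.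
- by apply/idP/idP => h; exfalso; lia.
- by apply/idP/idP => h; lia.
Qed.

Lemma fI_inj i : injective (fI i).
Proof.
move=> x y e; case: (ltngtP x y) => // h.
- by move: (fI_mono i x y); rewrite h e ltnn.
- by move: (fI_mono i y x); rewrite h e ltnn.
Qed.

Lemma rho1 i s : rho i 1 s = i :: map (fI i) s.
Proof. by rewrite /rho take0 drop0. Qed.

Lemma perm_facts pi : is_perm pi -> uniq pi /\ (forall z, z \in pi -> 1 <= z).
Proof.
rewrite /is_perm => hp; split; first by rewrite (perm_uniq hp) iota_uniq.
by move=> z; rewrite (perm_mem hp) mem_iota => /andP[].
Qed.

Theorem lemma4p1 (pi : seq nat) :
  is_perm pi -> rectangular pi ->
  [/\ rectangular (psi1 pi),
      (0 < size pi -> head 0 pi != 1 -> rectangular (psi2 pi)),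
      (0 < size pi -> head 0 pi != 1 -> rectangular (psiu pi)) &
      (0 < size pi -> rectangular (psid pi))].
Proof.
move=> /perm_facts [hu hge] /rectP hP.
have hPm i : P (map (fI i) pi) by apply: P_map hP => x y; apply: fI_mono.
split.
- rewrite /psi1 rho1; apply/rectP; apply: P_cons_small (hPm 1) _.
  move=> z /mapP [y hy ->]; move: (hge _ hy); rewrite /fI; case: leqP; lia.
- case: pi hu hge hP hPm => [|h t] //= hu hge hP hPm _ _.
  apply/rectP; rewrite /psi2 /rho /= take0 drop0 /=.
  apply: P_cons2_small (hPm 1) _.
  move=> z /mapP [y hy ->]; have := hge y; rewrite inE hy orbT => /(_ isT).
  rewrite /fI; case: leqP; lia.
- case: pi hu hge hP hPm => [|h t] //= hu hge hP hPm _ _.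
  apply/rectP; rewrite /psiu rho1 /=.
  have fh : fI h h = h.+1 by rewrite /fI leqnn.
  have := hPm h; rewrite /= fh => hPh.
  apply: P_adj hPh _ _ _; last by left.
  + rewrite -fh -map_cons; apply/mapP => -[y _]; rewrite /fI; case: leqP; lia.
  + rewrite -fh (mem_map (@fI_inj h)); by case/andP: hu.
- case: pi hu hge hP hPm => [|h t] //= hu hge hP hPm _.
  apply/rectP; rewrite /psid rho1 /=.
  have fh : fI h.+1 h = h by rewrite /fI ltnn.
  have := hPm h.+1; rewrite /= fh => hPh.
  apply: P_adj hPh _ _ _; last by right.
  + rewrite -{2}fh -map_cons; apply/mapP => -[y _]; rewrite /fI; case: leqP; lia.
  + rewrite -{1}fh (mem_map (@fI_inj h.+1)); by case/andP: hu.
Qed.
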